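(* Let $\mathcal{M}$ be the set of compactly supported probability distributions on $\mathbb{R}$ and $T:\mathcal{M}\to\mathcal{M}$. (i) $T\circ T^u=T^u\circ T$ for every increasing left-continuous $u:\mathbb{R}\to\mathbb{R}$ if and only if $T=T_d$ for some right-continuous distortion function $d$. (ii) $T\circ T_d=T_d\circ T$ for every right-continuous distortion function $d$ if and only if $T=T^u$ for some increasing left-continuous $u:\mathbb{R}\to\mathbb{R}$.
   Context: Increasing means non-decreasing. A distortion function is an increasing function $d:[0,1]\to[0,1]$ with $d(0)=0$, $d(1)=1$. $T_d(F)(x)=\lim_{y\downarrow x}d(F(y))$ for $x\in\mathbb{R}$. For increasing $u$, $T^u(F)=F\circ u^{-1}$ is the distribution of $u(X)$ when $X\sim F$. *)

(* Defs.v *)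
(* distributions on R represented by their CDFs. *)
From HB Require Import structures.
From mathcomp Require Import all_boot all_order all_algebra.
From mathcomp Require Import all_classical all_reals all_analysis.
Set Implicit Arguments. Unset Strict Implicit. Unset Printing Implicit Defensive.
Import Order.TTheory GRing.Theory Num.Theory.
Import numFieldNormedType.Exports.
Local Open Scope classical_set_scope.
Local Open Scope ring_scope.

Section Defs.
Variable R : realType.

Definition cdfM (F : R -> R) : Prop :=
  {homo F : x y / x <= y} /\
  (forall x, F y @[y --> x^'+] --> F x) /\
  (exists a b : R, (forall x, x < a -> F x = 0) /\ (forall x, b <= x -> F x = 1)).

(* distortion function d : [0,1] -> [0,1] (values outside [0,1] irrelevant) *)
Definition distortion (d : R -> R) : Prop :=
  (forall x y, 0 <= x -> x <= y -> y <= 1 -> d x <= d y) /\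
  (forall x, 0 <= x <= 1 -> 0 <= d x <= 1) /\
  d 0 = 0 /\ d 1 = 1.

Definition right_cont_dist (d : R -> R) : Prop :=
  forall x, 0 <= x < 1 -> d y @[y --> x^'+] --> d x.

Definition increasing (u : R -> R) : Prop := {homo u : x y / x <= y}.

Definition left_cont (u : R -> R) : Prop :=
  forall x, u y @[y --> x^'-] --> u x.

Definition Td (d : R -> R) (F : R -> R) : R -> R :=
  fun x => lim (d (F y) @[y --> x^'+]).

(* T^u(F)(x) = P(u(X) <= x) for X ~ F.  For increasing u the set
   {y | u y <= x} is a down-set of R, whose F-probability is
   sup {F y | u y <= x} (and 0 if it is empty). *)
Definition Tu (u : R -> R) (F : R -> R) : R -> R :=
  fun x => sup ([set 0] `|` [set F y | y in [set y | u y <= x]]).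

End Defs.

(* Main.v *)
Require Import Defs.
From HB Require Import structures.
From mathcomp Require Import all_boot all_order all_algebra.
From mathcomp Require Import all_classical all_reals all_analysis.
From mathcomp Require Import ring lra.
Import Order.TTheory GRing.Theory Num.Theory.
Import numFieldNormedType.Exports.
Local Open Scope classical_set_scope.
Local Open Scope ring_scope.
Section S.
Variable R : realType.
Implicit Types (F G : R -> R) (x y z s : R).

Lemma near_rightP (x : R) (P : R -> Prop) :
  (\forall y \near x^'+, P y) <-> exists2 d : R, 0 < d & forall y, x < y -> y < x + d -> P y.
Proof.
split.
- rewrite near_withinE => /nbhs_ballP[e e0 H]; exists e => // y xy ye.
  apply: H => //; rewrite /ball /= ltr0_norm ?subr_lt0 //; lra.
- move=> [d d0 H]; near=> y; apply: H; near: y; [exact: nbhs_right_gt|].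
  by apply: nbhs_right_lt; rewrite ltrDl.
Unshelve. all: by end_near. Qed.

Lemma near_leftP (x : R) (P : R -> Prop) :
  (\forall y \near x^'-, P y) <-> exists2 d : R, 0 < d & forall y, x - d < y -> y < x -> P y.
Proof.
split.
- rewrite near_withinE => /nbhs_ballP[e e0 H]; exists e => // y xy ye.
  apply: H => //; rewrite /ball /= gtr0_norm ?subr_gt0 //; lra.
- move=> [d d0 H]; near=> y; apply: H; near: y; [|exact: nbhs_left_lt].
  by apply: nbhs_left_gt; rewrite gtrBl.
Unshelve. all: by end_near. Qed.

Lemma rcP (f : R -> R) x l : f y @[y --> x^'+] --> l <->
  forall e, 0 < e -> exists2 d : R, 0 < d & forall y, x < y -> y < x + d -> `|l - f y| < e.
Proof.
rewrite cvgrPdist_lt; split => H e e0; first by apply/near_rightP; exact: H.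
by apply/near_rightP; exact: H.
Qed.

Lemma lcP (f : R -> R) x l : f y @[y --> x^'-] --> l <->
  forall e, 0 < e -> exists2 d : R, 0 < d & forall y, x - d < y -> y < x -> `|l - f y| < e.
Proof.
rewrite cvgrPdist_lt; split => H e e0; first by apply/near_leftP; exact: H.
by apply/near_leftP; exact: H.
Qed.

Lemma sup_max (A : set R) x0 : A x0 -> (forall a, A a -> a <= x0) -> sup A = x0.
Proof.
move=> Ax0 ub; apply/le_anti/andP; split; first by apply: ge_sup => //; exists x0.
by apply: ub_le_sup => //; exists x0.
Qed.

Lemma sup_le_ub (A : set R) b : A !=set0 -> (forall a, A a -> a <= b) -> sup A <= b.
Proof. by move=> ne ub; apply: ge_sup. Qed.

Lemma le_sup_mem (A : set R) b a : (forall a, A a -> a <= b) -> A a -> a <= sup A.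
Proof. by move=> ub Aa; apply: ub_le_sup => //; exists b. Qed.

Lemma cdf_ge0 F z : cdfM F -> 0 <= F z.
Proof.
move=> [Fm [_ [a [b [Fa Fb]]]]].
rewrite -(Fa (Num.min z (a - 1))); last by rewrite gt_min; apply/orP; right; lra.
by apply: Fm; rewrite ge_min lexx.
Qed.

Lemma cdf_le1 F z : cdfM F -> F z <= 1.
Proof.
move=> [Fm [_ [a [b [Fa Fb]]]]].
rewrite -(Fb (Num.max z b)); last by rewrite le_max lexx orbT.
by apply: Fm; rewrite le_max lexx.
Qed.

Definition q F s := inf [set z | s <= F z].

Lemma qP F s z : cdfM F -> 0 < s <= 1 -> (s <= F z <-> q F s <= z).
Proof.
move=> cF /andP[s0 s1]; have [Fm [Frc [a [b [Fa Fb]]]]] := cF.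
have Eb : [set z | s <= F z] b by rewrite /= Fb.
have lb : lbound [set z | s <= F z] a.
  move=> w /= sw; rewrite leNgt; apply/negP => wa; move: sw; rewrite Fa //; lra.
have hlb : has_lbound [set z | s <= F z] by exists a.
split; first by move=> sz; apply: ge_inf.
move=> qz; suff sq : s <= F (q F s) by apply: le_trans sq _; apply: Fm.
rewrite leNgt; apply/negP => Fqs.
have [d d0 Hd] := (rcP _ _ _).1 (Frc (q F s)) (s - F (q F s)) ltac:(lra).
have [y Ey yd] : exists2 y, [set z | s <= F z] y & y < q F s + d.
  by apply: inf_lt; [exists b | rewrite /q; lra].
have qy : q F s <= y by apply: ge_inf.
move: qy; rewrite le_eqVlt => /orP[/eqP qy|qy].
  by move: Ey; rewrite /= -qy; lra.
have := Hd y qy yd; move: Ey => /= Ey.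
have := Fm _ _ (ltW qy); rewrite ler0_norm; lra.
Qed.

Lemma q_uniq F s m : cdfM F -> 0 < s <= 1 -> (forall z, s <= F z <-> m <= z) -> q F s = m.
Proof.
move=> cF hs H; apply/le_anti/andP; split.
  by apply/(qP _ _ _ cF hs)/H.
by apply/H/(qP _ _ _ cF hs).
Qed.

Lemma q_ge_a F s a : cdfM F -> 0 < s <= 1 -> (forall x, x < a -> F x = 0) -> a <= q F s.
Proof.
move=> cF hs Fa; rewrite leNgt; apply/negP => qa.
have := (qP _ _ (q F s) cF hs).2 (lexx _); rewrite Fa //; move: hs => /andP; lra.
Qed.

Lemma q_le_b F s b : cdfM F -> 0 < s <= 1 -> (forall x, b <= x -> F x = 1) -> q F s <= b.
Proof.
move=> cF hs Fb; apply/(qP _ _ _ cF hs); rewrite Fb //; by move: hs => /andP[].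
Qed.

Lemma thr_eq a b : 0 <= a <= 1 -> 0 <= b <= 1 ->
  (forall s, 0 < s <= 1 -> (s <= a <-> s <= b)) -> a = b.
Proof.
move=> /andP[a0 a1] /andP[b0 b1] H; apply/le_anti/andP; split.
  rewrite leNgt; apply/negP => ba; have := (H a); rewrite lexx; move=> /(_ ltac:(apply/andP; split; lra)) [h _].
  by have := h isT; lra.
rewrite leNgt; apply/negP => ba; have := (H b); rewrite lexx; move=> /(_ ltac:(apply/andP; split; lra)) [_ h].
by have := h isT; lra.
Qed.


Lemma Tu_ub u F z : cdfM F -> forall a, ([set 0] `|` [set F y | y in [set y | u y <= z]]) a -> a <= 1.
Proof. by move=> cF a [->|[y _ <-]]; [exact: ler01 | exact: cdf_le1]. Qed.

Lemma Tu_ge0 u F z : cdfM F -> 0 <= Tu u F z.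
Proof. by move=> cF; apply: le_sup_mem; [exact: (@Tu_ub u F z cF) | left]. Qed.

Lemma Tu_le1 u F z : cdfM F -> Tu u F z <= 1.
Proof. by move=> cF; apply: sup_le_ub; [exists 0; left | exact: (@Tu_ub u F z cF)]. Qed.

Lemma TuP u F s z : increasing u -> left_cont u -> cdfM F -> 0 < s <= 1 ->
  (s <= Tu u F z <-> u (q F s) <= z).
Proof.
move=> ui ul cF hs; have [Fm _] := cF; split; last first.
  move=> uz; apply: le_trans (_ : F (q F s) <= _).
    exact/(qP _ _ _ cF hs).
  by apply: le_sup_mem; [exact: (@Tu_ub u F z cF) | right; exists (q F s)].
move=> sT; rewrite leNgt; apply/negP => zu.
have [d d0 Hd] := (lcP _ _ _).1 (ul (q F s)) (u (q F s) - z) ltac:(lra).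
set y0 := q F s - d / 2.
have uy0 : z < u y0.
  have h2 := Hd y0 ltac:(rewrite /y0; lra) ltac:(rewrite /y0; lra).
  have h1 := ui y0 (q F s) ltac:(rewrite /y0; lra).
  rewrite ger0_norm ?subr_ge0 // in h2; lra.
have Fy0 : F y0 < s.
  rewrite ltNge; apply/negP => /(qP _ _ _ cF hs); rewrite /y0; lra.
suff : Tu u F z <= F y0 by lra.
apply: sup_le_ub; first by exists 0; left.
move=> a [->|[y /= uy <-]]; first exact: cdf_ge0.
apply: Fm; rewrite leNgt; apply/negP => yy.
have := ui _ _ (ltW yy); lra.
Qed.

Lemma Tu_cdf u F : increasing u -> left_cont u -> cdfM F -> cdfM (Tu u F).
Proof.
move=> ui ul cF; have [Fm [Frc [a [b [Fa Fb]]]]] := cF.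
have Tmon : {homo Tu u F : x y / x <= y}.
  move=> x y xy; rewrite leNgt; apply/negP => yx.
  have h0 := @Tu_ge0 u F y cF; have h1 := @Tu_le1 u F x cF.
  have hs : 0 < Tu u F x <= 1 by apply/andP; split; lra.
  have := (@TuP u F _ x ui ul cF hs).1 (lexx _) => ux.
  have := (@TuP u F _ y ui ul cF hs).2 (le_trans ux xy); lra.
split => //; split.
  move=> x; apply/rcP => e e0.
  have [se|se] := leP (Tu u F x + e) 1; last first.
    exists 1 => // y xy _; have h1 := Tmon _ _ (ltW xy); have h2 := @Tu_le1 u F y cF.
    rewrite ler0_norm ?subr_le0 //; lra.
  have hs : 0 < Tu u F x + e <= 1 by have := @Tu_ge0 u F x cF => ?; apply/andP; split; lra.
  have nx : x < u (q F (Tu u F x + e)).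
    rewrite ltNge; apply/negP => /(@TuP u F _ _ ui ul cF hs); lra.
  exists (u (q F (Tu u F x + e)) - x); first lra.
  move=> y xy yd; have h1 := Tmon _ _ (ltW xy).
  have h2 : ~ (Tu u F x + e <= Tu u F y) by move/(@TuP u F _ _ ui ul cF hs); lra.
  rewrite ler0_norm ?subr_le0 //; move/negP: h2; rewrite -ltNge; lra.
exists (u a), (u b); split.
  move=> x xa; apply/le_anti/andP; split; last exact: Tu_ge0.
  rewrite leNgt; apply/negP => T0.
  have hs : 0 < Tu u F x <= 1 by have := @Tu_le1 u F x cF => ?; apply/andP; split; lra.
  have := (@TuP u F _ x ui ul cF hs).1 (lexx _).
  have := ui _ _ (@q_ge_a F _ a cF hs Fa); lra.
move=> x bx; apply/le_anti/andP; split; first exact: Tu_le1.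
have hs : (0:R) < (1:R) <= (1:R) by apply/andP; lra.
apply/(@TuP u F _ _ ui ul cF hs); apply: le_trans bx; apply: ui; exact: (@q_le_b F 1 b cF hs Fb).
Qed.


Lemma comp_rc d G x : cdfM G -> distortion d -> right_cont_dist d ->
  d (G y) @[y --> x^'+] --> d (G x).
Proof.
move=> cG [dm [dv [d0 d1]]] drc; have [Gm [Grc _]] := cG.
have g0 := @cdf_ge0 G x cG; have g1 := @cdf_le1 G x cG.
apply/rcP => e e0.
have [gx1|gx1] := ltP (G x) 1; last first.
  exists 1 => // y xy _.
  have h1 := Gm _ _ (ltW xy); have h2 := @cdf_le1 G y cG.
  have -> : G y = G x by apply/le_anti/andP; split; lra.
  by rewrite subrr normr0.
have [d1' d1p H1] := (rcP _ _ _).1 (drc (G x) ltac:(apply/andP; split => //)) e e0.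
have [d2 d2p H2] := (rcP _ _ _).1 (Grc x) d1' d1p.
exists d2 => // y xy yd.
have h1 := Gm _ _ (ltW xy); have h2 := H2 y xy yd.
move: h1; rewrite le_eqVlt => /orP[/eqP <-|h1]; first by rewrite subrr normr0.
apply: H1 => //; rewrite ler0_norm ?subr_le0 ?(ltW h1) // in h2; lra.
Qed.

Lemma Td_comp d G : cdfM G -> distortion d -> right_cont_dist d ->
  Td d G = fun x => d (G x).
Proof.
move=> cG dd drc; apply/funext => x; rewrite /Td; apply: cvg_lim; first exact: norm_hausdorff.
exact: comp_rc.
Qed.

Lemma comp_cdf d G : cdfM G -> distortion d -> right_cont_dist d ->
  cdfM (fun x => d (G x)).
Proof.
move=> cG dd drc; have [dm [dv [d0 d1]]] := dd; have [Gm [Grc [a [b [Ga Gb]]]]] := cG.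
split.
  move=> x y xy; apply: dm; [exact: cdf_ge0 | exact: Gm | exact: cdf_le1].
split; first by move=> x; exact: comp_rc.
by exists a, b; split => x hx; [rewrite Ga | rewrite Gb].
Qed.

Lemma TuA d u F : increasing u -> left_cont u -> cdfM F -> distortion d ->
  Tu u (fun y => d (F y)) = fun z => d (Tu u F z).
Proof.
move=> ui ul cF [dm [dv [d0 d1]]]; apply/funext => z.
have t0 := @Tu_ge0 u F z cF; have t1 := @Tu_le1 u F z cF.
have [tp|tn] := ltP 0 (Tu u F z); last first.
  have -> : Tu u F z = 0 by apply/le_anti/andP; split.
  rewrite d0; apply: sup_max; first by left.
  move=> a [->|[y /= uy <-]] //.
  have : F y <= Tu u F z by apply: le_sup_mem; [exact: (@Tu_ub u F z cF) | right; exists y].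
  have := @cdf_ge0 F y cF => h1 h2.
  have -> : F y = 0 by apply/le_anti/andP; split; lra.
  by rewrite d0.
have hs : 0 < Tu u F z <= 1 by apply/andP; split.
set m := q F (Tu u F z).
have um : u m <= z by apply/(@TuP u F _ z ui ul cF hs).
have Fm1 : Tu u F z <= F m by apply/(qP _ _ _ cF hs).
have Fm2 : F m <= Tu u F z.
  by apply: le_sup_mem; [exact: (@Tu_ub u F z cF) | right; exists m].
have -> : Tu u F z = F m by apply/le_anti/andP; split.
apply: sup_max; first by right; exists m.
move=> a [->|[y /= uy <-]].
  by have := dv (F m) ltac:(apply/andP; split; [exact: cdf_ge0 | exact: cdf_le1]) => /andP[].
have : F y <= Tu u F z by apply: le_sup_mem; [exact: (@Tu_ub u F z cF) | right; exists y].
move=> h; apply: dm; [exact: cdf_ge0 | lra | exact: cdf_le1].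
Qed.

Lemma TuAll u F z : cdfM F -> (forall y, u y <= z) -> Tu u F z = 1.
Proof.
move=> cF H; have [_ [_ [a [b [_ Fb]]]]] := cF.
apply: sup_max; first by right; exists b; [exact: H | exact: (Fb b (lexx b))].
exact: (@Tu_ub u F z cF).
Qed.

Lemma TuNone u F z : (forall y, z < u y) -> Tu u F z = 0.
Proof.
move=> H; apply: sup_max; first by left.
by move=> a [->|[y /= uy _]] //; have := H y; lra.
Qed.

Lemma TuDown u F z x : cdfM F -> (forall y, u y <= z <-> y <= x) -> Tu u F z = F x.
Proof.
move=> cF H; have [Fm _] := cF.
apply: sup_max; first by right; exists x => //; apply/H.
move=> a [->|[y /= uy <-]]; first exact: cdf_ge0.
by apply: Fm; apply/H.
Qed.

Definition U (z : R) : R := if z < 0 then 0 else if z < 1 then z else 1.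

Lemma U_lip x y : x <= y -> 0 <= U y - U x <= y - x.
Proof.
move=> xy; apply/andP; rewrite /U.
case: (ltP x 0) => h1; case: (ltP x 1) => h2; case: (ltP y 0) => h3; case: (ltP y 1) => h4; split; lra.
Qed.

Lemma U_cdf : cdfM U.
Proof.
split; first by move=> x y /U_lip /andP[]; lra.
split.
  move=> x; apply/rcP => e e0; exists e => // y xy ye.
  have /andP[h1 h2] := @U_lip x y (ltW xy); rewrite ler0_norm; lra.
exists 0, 1; split => x hx; rewrite /U.
  by rewrite hx.
by case: (ltP x 0) => h1; case: (ltP x 1) => h2 //; lra.
Qed.

Lemma U_thr s z : 0 < s <= 1 -> (s <= U z <-> s <= z).
Proof.
move=> /andP[s0 s1]; rewrite /U.
case: (ltP z 0) => h1; case: (ltP z 1) => h2; split => h; lra.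
Qed.

Lemma qU s : 0 < s <= 1 -> q U s = s.
Proof. by move=> hs; apply: q_uniq => //; [exact: U_cdf | move=> z; exact: U_thr]. Qed.

Lemma U_id p : 0 <= p <= 1 -> U p = p.
Proof.
move=> /andP[p0 p1]; rewrite /U; case: (ltP p 0) => h1; case: (ltP p 1) => h2; lra.
Qed.

Definition Dlt (m z : R) : R := if m <= z then 1 else 0.

Lemma Dlt_cdf m : cdfM (Dlt m).
Proof.
split.
  by move=> x y xy; rewrite /Dlt; case: (leP m x) => h1; case: (leP m y) => h2; lra.
split.
  move=> x; apply/rcP => e e0.
  have [hx|hx] := leP m x.
    exists 1 => // y xy _; rewrite /Dlt; case: (leP m x) => h1; case: (leP m y) => h2;
    rewrite ?subrr ?normr0 //; lra.
  exists (m - x); first lra.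
  move=> y xy yd; rewrite /Dlt; case: (leP m x) => h1; case: (leP m y) => h2;
  rewrite ?subrr ?normr0 //; lra.
exists m, m; split => x hx; rewrite /Dlt; case: (leP m x) => h //; lra.
Qed.

Lemma q_Dlt c : q (Dlt c) 1 = c.
Proof.
apply: q_uniq; [exact: Dlt_cdf | apply/andP; lra |].
move=> z; rewrite /Dlt; case: (leP c z) => h; split => h'; lra.
Qed.

Lemma Dlt_inj a b : Dlt a = Dlt b -> a = b.
Proof.
move=> E; have := congr1 (fun f => f a) E; have := congr1 (fun f => f b) E.
rewrite /Dlt /= !lexx; case: (leP a b) => h1; case: (leP b a) => h2; lra.
Qed.

Definition ds (s p : R) : R := if s <= p then 1 else 0.

Lemma ds_dist s : 0 < s <= 1 -> distortion (ds s).
Proof.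
move=> /andP[s0 s1]; split.
  by move=> x y x0 xy y1; rewrite /ds; case: (leP s x) => h1; case: (leP s y) => h2; lra.
split.
  by move=> x _; rewrite /ds; case: (leP s x) => h1; apply/andP; lra.
by rewrite /ds; case: (leP s 0) => h1; case: (leP s 1) => h2; split; lra.
Qed.

Lemma ds_rc s : 0 < s <= 1 -> right_cont_dist (ds s).
Proof.
move=> /andP[s0 s1] x _; apply/rcP => e e0.
have [hx|hx] := leP s x.
  exists 1 => // y xy _; rewrite /ds; case: (leP s x) => h1; case: (leP s y) => h2;
  rewrite ?subrr ?normr0 //; lra.
exists (s - x); first lra.
move=> y xy yd; rewrite /ds; case: (leP s x) => h1; case: (leP s y) => h2;
rewrite ?subrr ?normr0 //; lra.
Qed.

Lemma Td_ds s F : cdfM F -> 0 < s <= 1 -> Td (ds s) F = Dlt (q F s).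
Proof.
move=> cF hs; rewrite Td_comp //; [|exact: ds_dist | exact: ds_rc].
apply/funext => z; have [H1 H2] := @qP F s z cF hs; rewrite /ds /Dlt.
case: (leP s (F z)) => h1; case: (leP (q F s) z) => h2 //.
  by have := H1 h1; lra.
by have := H2 h2; lra.
Qed.

Definition ind (x y : R) : R := if x < y then 1 else 0.

Lemma ind_incr x : increasing (ind x).
Proof. by move=> y z yz; rewrite /ind; case: (ltP x y) => h1; case: (ltP x z) => h2; lra. Qed.

Lemma ind_lc x : left_cont (ind x).
Proof.
move=> c; apply/lcP => e e0.
have [hx|hx] := ltP x c.
  exists (c - x); first lra.
  move=> y yc _; rewrite /ind; case: (ltP x c) => h1; case: (ltP x y) => h2;
  rewrite ?subrr ?normr0 //; lra.
exists 1 => // y _ yc; rewrite /ind; case: (ltP x c) => h1; case: (ltP x y) => h2;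
rewrite ?subrr ?normr0 //; lra.
Qed.

Lemma Tu_ind x F z : cdfM F ->
  Tu (ind x) F z = if z < 0 then 0 else if z < 1 then F x else 1.
Proof.
move=> cF; case: (ltP z 0) => h1.
  by apply: TuNone => y; rewrite /ind; case: (ltP x y) => h; lra.
case: (ltP z 1) => h2.
  apply: TuDown => // y; rewrite /ind; case: (ltP x y) => h; split => h'; lra.
by apply: TuAll => // y; rewrite /ind; case: (ltP x y) => h; lra.
Qed.

Definition cst (c y : R) : R := c.

Lemma cst_incr c : increasing (cst c).
Proof. by move=> y z _; rewrite /cst lexx. Qed.

Lemma cst_lc c : left_cont (cst c).
Proof. by move=> x; rewrite /cst; exact: cvg_cst. Qed.

Lemma Tu_cst c F : cdfM F -> Tu (cst c) F = Dlt c.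
Proof.
move=> cF; apply/funext => z; rewrite /Dlt; case: (leP c z) => h.
  by apply: TuAll.
by apply: TuNone.
Qed.

Definition aff (a b t : R) : R := a + t * b.

Lemma aff_incr a b : 0 <= b -> increasing (aff a b).
Proof. by move=> b0 x y xy; rewrite /aff lerD2l; apply: ler_wpM2r. Qed.

Lemma aff_lc a b : left_cont (aff a b).
Proof.
move=> x; apply: cvg_at_left_filter; rewrite /aff.
apply: cvgD; first exact: cvg_cst.
apply: cvgMl; exact: cvg_id.
Qed.

Lemma h01 : (0:R) < (1:R) <= (1:R).
Proof. by apply/andP; split; [exact: ltr01 | exact: lexx]. Qed.

Lemma dir1 (T : (R -> R) -> (R -> R)) (hT : forall F, cdfM F -> cdfM (T F)) :
  (forall u : R -> R, increasing u -> left_cont u ->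
      forall F, cdfM F -> T (Tu u F) = Tu u (T F)) ->
  exists d : R -> R, distortion d /\ right_cont_dist d /\
        forall F, cdfM F -> T F = Td d F.
Proof.
move=> H; pose d := T U; have cTU := hT _ U_cdf.
have Tdelta c : T (Dlt c) = Dlt c.
  rewrite -(@Tu_cst c U U_cdf) (H _ (cst_incr c) (cst_lc c) _ U_cdf).
  by rewrite (@Tu_cst c (T U) cTU) (@Tu_cst c U U_cdf).
have key F x : cdfM F -> T F x = d (F x).
  move=> cF; have cTF := hT _ cF.
  have e1 : T F x = Tu (ind x) (T F) 0 by rewrite Tu_ind // ltxx ltr01.
  rewrite e1 -(H _ (ind_incr x) (ind_lc x) _ cF).
  have -> : Tu (ind x) F = Tu (ind (F x)) U.
    apply/funext => z; rewrite !Tu_ind //; last exact: U_cdf.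
    rewrite U_id //; apply/andP; split; [exact: cdf_ge0 | exact: cdf_le1].
  by rewrite (H _ (ind_incr _) (ind_lc _) _ U_cdf) Tu_ind // ltxx ltr01.
exists d; split; [|split].
- split.
    by move=> x y _ xy _; have [m _] := cTU; exact: m.
  split.
    by move=> x _; apply/andP; split; [exact: cdf_ge0 | exact: cdf_le1].
  split.
    have h : Dlt 1 0 = 0 :> R by rewrite /Dlt; case: (leP (1:R) 0) => h; lra.
    by have := key (Dlt 1) 0 (Dlt_cdf 1); rewrite Tdelta h => /esym.
  have h : Dlt 0 0 = 1 :> R by rewrite /Dlt lexx.
  by have := key (Dlt 0) 0 (Dlt_cdf 0); rewrite Tdelta h => /esym.
- by move=> x _; have [_ [rc _]] := cTU; exact: rc.
- move=> F cF; apply/funext => x; rewrite /Td.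
  have -> : (fun y => d (F y)) = T F by apply/funext => y; rewrite key.
  apply/esym/cvg_lim; first exact: norm_hausdorff.
  by have [_ [rc _]] := hT _ cF; exact: rc.
Qed.

Lemma dir1b (T : (R -> R) -> (R -> R)) (hT : forall F, cdfM F -> cdfM (T F)) :
  (exists d : R -> R, distortion d /\ right_cont_dist d /\
        forall F, cdfM F -> T F = Td d F) ->
  (forall u : R -> R, increasing u -> left_cont u ->
      forall F, cdfM F -> T (Tu u F) = Tu u (T F)).
Proof.
move=> [d [dd [drc hd]]] u ui ul F cF.
have cTu := @Tu_cdf u F ui ul cF.
rewrite (hd _ cTu) (hd _ cF) (@Td_comp d _ cTu dd drc) (@Td_comp d _ cF dd drc).
by rewrite (@TuA d u F ui ul cF dd).
Qed.

Lemma dir2b (T : (R -> R) -> (R -> R)) (hT : forall F, cdfM F -> cdfM (T F)) :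
  (exists u : R -> R, increasing u /\ left_cont u /\
        forall F, cdfM F -> T F = Tu u F) ->
  (forall d : R -> R, distortion d -> right_cont_dist d ->
      forall F, cdfM F -> T (Td d F) = Td d (T F)).
Proof.
move=> [u [ui [ul hu]]] d dd drc F cF.
have cTu := @Tu_cdf u F ui ul cF.
rewrite (@Td_comp d _ cF dd drc) (hu _ (@comp_cdf d _ cF dd drc)) (hu _ cF) (@Td_comp d _ cTu dd drc).
by rewrite (@TuA d u F ui ul cF dd).
Qed.

Lemma dir2 (T : (R -> R) -> (R -> R)) (hT : forall F, cdfM F -> cdfM (T F)) :
  (forall d : R -> R, distortion d -> right_cont_dist d ->
      forall F, cdfM F -> T (Td d F) = Td d (T F)) ->
  exists u : R -> R, increasing u /\ left_cont u /\
        forall F, cdfM F -> T F = Tu u F.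
Proof.
move=> H; pose u := fun c => q (T (Dlt c)) 1.
have TD c : T (Dlt c) = Dlt (u c).
  have e : Td (ds 1) (Dlt c) = Dlt c by rewrite Td_ds ?q_Dlt //; [exact: Dlt_cdf | exact: h01].
  rewrite -{1}e (H _ (@ds_dist 1 h01) (@ds_rc 1 h01) _ (Dlt_cdf c)).
  by rewrite Td_ds //; [exact: hT (Dlt_cdf c) | exact: h01].
have qT F s : cdfM F -> 0 < s <= 1 -> q (T F) s = u (q F s).
  move=> cF hs; apply: Dlt_inj.
  rewrite -(@Td_ds s (T F) (hT _ cF) hs) -TD -(@Td_ds s F cF hs).
  by rewrite (H _ (@ds_dist s hs) (@ds_rc s hs) _ cF).
have thr F s z : cdfM F -> 0 < s <= 1 -> (s <= T F z <-> u (q F s) <= z).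
  by move=> cF hs; rewrite -qT //; exact: (@qP (T F) s z (hT _ cF) hs).
have qaff a b s : 0 <= b -> 0 < s <= 1 -> q (Tu (aff a b) U) s = aff a b s.
  move=> b0 hs; apply: q_uniq => //; first exact: (@Tu_cdf (aff a b) U (@aff_incr a b b0) (aff_lc a b) U_cdf).
  move=> z; rewrite -[in X in _ <-> X](@qU s hs).
  exact: (@TuP (aff a b) U s z (@aff_incr a b b0) (aff_lc a b) U_cdf hs).
have cA a b : 0 <= b -> cdfM (Tu (aff a b) U).
  by move=> b0; exact: (@Tu_cdf (aff a b) U (@aff_incr a b b0) (aff_lc a b) U_cdf).
have ui : increasing u.
  move=> a b ab.
  have b0 : 0 <= 2 * (b - a) by rewrite mulr_ge0 // subr_ge0.
  have e1 : aff (2 * a - b) (2 * (b - a)) 1 = b by rewrite /aff; ring.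
  have hs2 : 0 < (2:R)^-1 <= 1.
    apply/andP; split; first by rewrite invr_gt0 ltr0n.
    by rewrite invf_le1 ?ltr0n // ler1n.
  have e2 : aff (2 * a - b) (2 * (b - a)) 2^-1 = a.
    rewrite /aff mulrA mulVf ?pnatr_eq0 // mul1r; ring.
  have h1 := thr _ 1 (u b) (cA (2 * a - b) _ b0) h01.
  have h2 := thr _ 2^-1 (u b) (cA (2 * a - b) _ b0) hs2.
  have E1 : u (q (Tu (aff (2 * a - b) (2 * (b - a))) U) 1) <= u b.
    by rewrite qaff ?e1 //; exact: h01.
  have E2 : u (q (Tu (aff (2 * a - b) (2 * (b - a))) U) 2^-1) = u a.
    by rewrite qaff ?e2.
  have k1 := h1.2 E1.
  rewrite -E2; apply: h2.1; apply: le_trans k1.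
  by move: hs2 => /andP[].
have ul : left_cont u.
  move=> c; apply/lcP => e e0.
  have b0 : (0:R) <= 1 by exact: ler01.
  have cF := cA (c - 1) 1 b0; have cG := hT _ cF.
  set G := T _ in cG.
  have g0 := @cdf_ge0 G (u c - e) cG.
  have g1 : G (u c - e) < 1.
    rewrite ltNge; apply/negP => hh.
    have k := (thr _ 1 (u c - e) cF h01).1 hh.
    have Ec : u (q (Tu (aff (c - 1) 1) U) 1) = u c.
      by rewrite qaff ?h01 // /aff mulr1 subrK.
    have k2 : u c <= u c - e by rewrite -{1}Ec; exact: k.
    lra.
  set g := G (u c - e) in g0 g1.
  have hs : 0 < (g + 1) / 2 <= 1 by apply/andP; split; lra.
  have hn : ~ (u (aff (c - 1) 1 ((g + 1) / 2)) <= u c - e).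
    move=> h.
    have : u (q (Tu (aff (c - 1) 1) U) ((g + 1) / 2)) <= u c - e by rewrite qaff.
    move/(thr _ _ _ cF hs) => k.
    have : (g + 1) / 2 <= g by exact: k.
    lra.
  move/negP: hn; rewrite -ltNge /aff mulr1 => hn.
  exists (1 - (g + 1) / 2); first lra.
  move=> y y1 y2.
  have hy : c - 1 + (g + 1) / 2 <= y by lra.
  have h1 := ui (c - 1 + (g + 1) / 2) y hy.
  have h2 := ui y c (ltW y2).
  rewrite ger0_norm ?subr_ge0 //; lra.
exists u; split; first exact: ui.
split; first exact: ul.
move=> F cF; apply/funext => z.
apply: thr_eq.
- by apply/andP; split; [exact: (@cdf_ge0 (T F) z (hT _ cF)) | exact: (@cdf_le1 (T F) z (hT _ cF))].
- by apply/andP; split; [exact: (@Tu_ge0 u F z cF) | exact: (@Tu_le1 u F z cF)].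
- move=> s hs; have := thr F s z cF hs; have := @TuP u F s z ui ul cF hs; tauto.
Qed.
End S.

Theorem proposition3 (R : realType) (T : (R -> R) -> (R -> R))
  (hT : forall F, cdfM F -> cdfM (T F)) :
  ((forall u : R -> R, increasing u -> left_cont u ->
      forall F, cdfM F -> T (Tu u F) = Tu u (T F))
   <-> exists d : R -> R, distortion d /\ right_cont_dist d /\
        forall F, cdfM F -> T F = Td d F)
  /\
  ((forall d : R -> R, distortion d -> right_cont_dist d ->
      forall F, cdfM F -> T (Td d F) = Td d (T F))
   <-> exists u : R -> R, increasing u /\ left_cont u /\
        forall F, cdfM F -> T F = Tu u F).
Proof.
split; split.
- exact: dir1.
- exact: dir1b.
- exact: dir2.
- exact: dir2b.
Qed.
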